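(* In the setting of the context, let $\mathbf{X}\in\{0,1\}^E$ be the indicator vector of the edges matched by MMP-ALG. Then, in the limit $T\to\infty$ with $|U|=o(\sqrt{T})$, $\mathbb{E}[f(\mathbf{X})]\ge (1-1/e)F(\mathbf{x}^* )$.
   Context: Bipartite graph $G=(U,V,E)$; online rounds $t=1,\dots,T$, in each of which independently at most one $v\in V$ arrives, $v$ with probability $p_v$, $\sum_v p_v\le 1$, $r_v=Tp_v\in[0,1]$. Each $u\in U$ can be matched at most once. $f:2^E\to\mathbb{R}_{\ge0}$ is non-negative monotone submodular (identified with a function on $\{0,1\}^E$ via indicator vectors), and $F$ is its multilinear extension $F(\mathbf{x})=\sum_{S\subseteq E}\prod_{e\in S}x_e\prod_{e\notin S}(1-x_e) f(S)$. $E(w)$ denotes the set of edges incident to $w$. $\mathbf{x}^*\in[0,1]^E$ satisfies $\sum_{e\in E(v)}x^*_e\le r_v$ for all $v\in V$ and $\sum_{e\in E(u)}x^*_e\le1$ for all $u\in U$. MMP-ALG: when $v$ arrives, sample at most one edge $e\in E(v)$, each $e$ with probability $x^*_e/r_v$; if $e=(u,v)$ is sampled and $u$ is still unmatched, match $e$, otherwise skip. *)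

(* Defs.v *)
From HB Require Import structures.
From mathcomp Require Import all_boot all_order all_algebra.
From mathcomp Require Import reals sequences exp.
Set Implicit Arguments. Unset Strict Implicit. Unset Printing Implicit Defensive.
Import Order.TTheory GRing.Theory Num.Theory.
Local Open Scope ring_scope.

Section MMP.
Variables (R : realType) (U V Ed : finType) (eu : Ed -> U) (ev : Ed -> V).

Definition set_nonneg (f : {set Ed} -> R) := forall S, 0 <= f S.
Definition set_monotone (f : {set Ed} -> R) :=
  forall A B : {set Ed}, A \subset B -> f A <= f B.
Definition set_submodular (f : {set Ed} -> R) :=
  forall A B : {set Ed}, f (A :|: B) + f (A :&: B) <= f A + f B.

Definition multilinear_ext (f : {set Ed} -> R) (x : Ed -> R) : R :=
  \sum_(S : {set Ed})
     ((\prod_(e in S) x e) * (\prod_(e in ~: S) (1 - x e)) * f S).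

Definition rate (T : nat) (p : V -> R) (v : V) : R := T%:R * p v.

(* outcome of one round: None = no arrival; Some (v, None) = v arrives and no
   edge is sampled; Some (v, Some e) = v arrives and edge e is sampled *)
Definition outcome := option (V * option Ed).

Definition round_prob (T : nat) (p : V -> R) (x : Ed -> R) (o : outcome) : R :=
  match o with
  | None => 1 - \sum_(v : V) p v
  | Some (v, None) =>
      p v * (1 - \sum_(e : Ed | ev e == v) x e / rate T p v)
  | Some (v, Some e) =>
      if ev e == v then p v * (x e / rate T p v) else 0
  end.

Definition alg_step (M : {set Ed}) (o : outcome) : {set Ed} :=
  match o with
  | Some (v, Some e) =>
      if (ev e == v) && ~~ [exists e' in M, eu e' == eu e] then e |: M else M
  | _ => M
  end.

(* the set of matched edges (support of the indicator vector X) *)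
Definition alg_run (T : nat) (w : {ffun 'I_T -> outcome}) : {set Ed} :=
  foldl alg_step set0 [seq w t | t <- enum 'I_T].

Definition alg_expectation (T : nat) (p : V -> R) (x : Ed -> R)
    (f : {set Ed} -> R) : R :=
  \sum_(w : {ffun 'I_T -> outcome})
     (\prod_(t < T) round_prob T p x (w t)) * f (alg_run w).

End MMP.

(* Main.v *)
Require Import Defs.
From HB Require Import structures.
From mathcomp Require Import all_boot all_order all_algebra.
From mathcomp Require Import reals sequences exp.
From mathcomp Require Import ring lra.
Import Order.TTheory GRing.Theory Num.Theory.
Local Open Scope ring_scope.
Set Implicit Arguments. Unset Strict Implicit. Unset Printing Implicit Defensive.
Section Fine.
Variables (R : realType) (Ed : finType) (x : Ed -> R).
Hypothesis x01 : forall e, 0 <= x e <= 1.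

Definition wt (S : {set Ed}) : R :=
  \prod_(e in S) x e * \prod_(e in ~: S) (1 - x e).
Definition EX (g : {set Ed} -> R) : R := \sum_(S : {set Ed}) wt S * g S.

Lemma wt_ge0 S : 0 <= wt S.
Proof.
apply: mulr_ge0; apply: prodr_ge0 => e _; have /andP[h0 h1] := x01 e => //.
by rewrite subr_ge0.
Qed.

Lemma EX_le g1 g2 : (forall S, g1 S <= g2 S) -> EX g1 <= EX g2.
Proof. by move=> h; apply: ler_sum => S _; apply: ler_wpM2l; [apply: wt_ge0|]. Qed.

Lemma EX_ge0 g : (forall S, 0 <= g S) -> 0 <= EX g.
Proof. by move=> h; apply: sumr_ge0 => S _; apply: mulr_ge0; [apply: wt_ge0|]. Qed.

Lemma EX_add g1 g2 : EX (fun S => g1 S + g2 S) = EX g1 + EX g2.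
Proof. by rewrite /EX -big_split; apply: eq_bigr => S _; rewrite mulrDr. Qed.

Lemma EX_opp g : EX (fun S => - g S) = - EX g.
Proof. by rewrite /EX -sumrN; apply: eq_bigr => S _; rewrite mulrN. Qed.

Lemma EX_sub g1 g2 : EX (fun S => g1 S - g2 S) = EX g1 - EX g2.
Proof. by rewrite EX_add EX_opp. Qed.

Lemma EX_scale c g : EX (fun S => c * g S) = c * EX g.
Proof. by rewrite /EX mulr_sumr; apply: eq_bigr => S _; rewrite mulrCA. Qed.

Lemma EX_sum (I : finType) (P : pred I) (G : I -> {set Ed} -> R) :
  EX (fun S => \sum_(i | P i) G i S) = \sum_(i | P i) EX (G i).
Proof.
rewrite /EX; under eq_bigr do rewrite mulr_sumr.
by rewrite exchange_big.
Qed.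

Lemma EX_ext g1 g2 : (forall S, g1 S = g2 S) -> EX g1 = EX g2.
Proof. by move=> h; apply: eq_bigr => S _; rewrite h. Qed.

Lemma wt_split (S : {set Ed}) (e : Ed) : e \in S ->
  wt S = x e * (\prod_(i in S :\ e) x i * \prod_(i in ~: S) (1 - x i)) /\
  wt (S :\ e) = (1 - x e) * (\prod_(i in S :\ e) x i * \prod_(i in ~: S) (1 - x i)).
Proof.
move=> eS; split.
  rewrite /wt (bigD1 e) //= mulrA; congr (_ * _ * _).
  by apply: eq_bigl => i; rewrite in_setD1 andbC.
rewrite /wt [X in _ * X](bigD1 e) /=; last by rewrite in_setC in_setD1 eqxx.
rewrite mulrCA; congr (_ * _); congr (_ * _).
apply: eq_bigl => i; rewrite !in_setC in_setD1.
by case: eqP => [->|]; rewrite ?eS //= andbT.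
Qed.

Lemma EX_mem e g : EX (fun S => (e \in S)%:R * g S) = x e * EX (fun S => g (e |: S)).
Proof.
rewrite /EX (bigID (fun S : {set Ed} => e \in S)) /=.
rewrite [in RHS](bigID (fun S : {set Ed} => e \in S)) /=.
have -> : \sum_(S : {set Ed} | e \notin S) wt S * ((e \in S)%:R * g S) = 0.
  by apply: big1 => S /negbTE ->; rewrite mul0r mulr0.
rewrite addr0.
pose tau (S : {set Ed}) := if e \in S then S :\ e else e |: S.
have tauK : involutive tau.
  move=> S; rewrite /tau; case: (boolP (e \in S)) => eS.
    by rewrite setD11 setD1K.
  by rewrite setU11 setU1K.
rewrite [X in _ = _ * (_ + X)](reindex_inj (inv_inj tauK)) /=.
have -> : \sum_(j : {set Ed} | e \notin tau j) wt (tau j) * g (e |: tau j) =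
          \sum_(j : {set Ed} | e \in j) wt (j :\ e) * g j.
  apply: eq_big => S; first by rewrite /tau; case: (boolP (e \in S)) => eS;
    rewrite ?setD11 ?setU11.
  rewrite /tau; case: (boolP (e \in S)) => eS /=; last by rewrite setU11.
  by move=> _; rewrite setD1K.
rewrite -big_split mulr_sumr; apply: eq_bigr => S eS.
have [-> ->] := wt_split eS.
rewrite eS mul1r (setUidPr _); last by rewrite sub1set.
set c := (\prod_(i in S :\ e) x i * _).
rewrite /=; ring.
Qed.


Lemma wt_prod (S : {set Ed}) : wt S = \prod_e (if e \in S then x e else 1 - x e).
Proof.
rewrite (bigID (fun e => e \in S)) /= /wt; congr (_ * _).
  by apply: eq_bigr => e ->.
by apply: eq_big => [e|e]; rewrite ?in_setC // => /negbTE ->.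
Qed.

Lemma EX1 : EX (fun _ => 1) = 1.
Proof.
rewrite /EX; under eq_bigr do rewrite mulr1 wt_prod.
rewrite (reindex (fun phi : {ffun Ed -> bool} => [set e | phi e])) /=; last first.
  exists (fun S : {set Ed} => [ffun e => e \in S]) => [phi _|S _].
    by apply/ffunP => e; rewrite ffunE inE.
  by apply/setP => e; rewrite inE ffunE.
under eq_bigr do under eq_bigr do rewrite inE.
rewrite -(bigA_distr_bigA (fun e (b : bool) => if b then x e else 1 - x e)) /=.
by apply: big1 => e _; rewrite big_bool /=; rewrite addrC subrK.
Qed.
End Fine.
Section Sub.
Variables (R : realType) (Ed : finType) (f : {set Ed} -> R).
Hypothesis fmono : set_monotone f.
Hypothesis fsub : set_submodular f.

Lemma f_mono1 X e : f X <= f (e |: X).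
Proof. by apply: fmono; apply: subsetUr. Qed.

Lemma subadd X A : f (X :|: A) <= f X + \sum_(e in A) (f (e |: X) - f X).
Proof.
elim: {A}_.+1 {-2}A (ltnSn #|A|) => // n IH A hA.
case: (set_0Vmem A) => [->|[e eA]].
  by rewrite setU0 big_set0 addr0.
rewrite (bigD1 e) //=.
have hA' : (#|A :\ e| < n)%N by rewrite (cardsD1 e A) eA add1n ltnS in hA.
have := IH _ hA'.
have := fsub (X :|: A :\ e) (e |: X).
have -> : (X :|: A :\ e) :|: (e |: X) = X :|: A.
  apply/setP => y; rewrite !inE; case: (eqVneq y e) => [->|ne].
    by rewrite eA !orbT.
  by case: (y \in X); case: (y \in A).
have -> : (X :|: A :\ e) :&: (e |: X) = X.
  apply/setP => y; rewrite !inE; case: (eqVneq y e) => [->|ne].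
    by case: (e \in X).
  by case: (y \in X); case: (y \in A).
have -> : \sum_(i in A | i != e) (f (i |: X) - f X) = \sum_(i in A :\ e) (f (i |: X) - f X).
  by apply: eq_bigl => i; rewrite in_setD1 andbC.
lra.
Qed.
End Sub.
Lemma sum_option (R : realType) (X : finType) (F : option X -> R) :
  \sum_(o : option X) F o = F None + \sum_(t : X) F (Some t).
Proof.
rewrite (bigD1 None) //=; congr (_ + _).
rewrite (reindex_omap Some (fun o => o)) /=; last by case=> // t _.
by apply: eq_bigl => t; rewrite eqxx.
Qed.

Section Alg.
Variables (R : realType) (U V Ed : finType) (eu : Ed -> U) (ev : Ed -> V).
Variables (f : {set Ed} -> R) (T : nat) (p : V -> R) (x : Ed -> R).
Hypothesis fnn : set_nonneg f.
Hypothesis fmono : set_monotone f.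
Hypothesis fsub : set_submodular f.
Hypothesis p0 : forall v, 0 <= p v.
Hypothesis psum : \sum_(v : V) p v <= 1.
Hypothesis x01 : forall e, 0 <= x e <= 1.
Hypothesis xv : forall v, \sum_(e : Ed | ev e == v) x e <= rate T p v.
Hypothesis xu : forall u, \sum_(e : Ed | eu e == u) x e <= 1.
Hypothesis T1 : (0 < T)%N.

Notation P := (round_prob ev T p x).
Notation step := (alg_step eu ev).
Definition freeU (M : {set Ed}) (u : U) := ~~ [exists e' in M, eu e' == u].

Lemma x0 e : 0 <= x e. Proof. by case/andP: (x01 e). Qed.

Lemma Tpos : 0 < T%:R :> R. Proof. by rewrite ltr0n. Qed.

Lemma x_pv0 v e : ev e = v -> p v = 0 -> x e = 0.
Proof.
move=> <- hp; have := xv (ev e); rewrite /rate hp mulr0 => hs.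
have hnn : forall i, ev i == ev e -> 0 <= x i by move=> i _; apply: x0.
have hz : \sum_(e' | ev e' == ev e) x e' = 0.
  by apply/eqP; rewrite eq_le hs sumr_ge0.
by apply: (psumr_eq0P hnn hz).
Qed.

Lemma sum_div_le v : \sum_(e | ev e == v) x e / rate T p v <= 1.
Proof.
rewrite -mulr_suml; case: (eqVneq (rate T p v) 0) => [->|nz].
  by rewrite invr0 mulr0.
have rpos : 0 < rate T p v.
  by rewrite lt0r nz /rate mulr_ge0 ?ler0n ?p0.
by rewrite ler_pdivrMr // mul1r xv.
Qed.

Lemma P_ge0 o : 0 <= P o.
Proof.
case: o => [[v [e|]]|] /=.
- case: (ev e == v) => //; apply: mulr_ge0 => //; apply: divr_ge0; first exact: x0.
  by rewrite /rate mulr_ge0 ?ler0n.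
- by apply: mulr_ge0 => //; rewrite subr_ge0 sum_div_le.
- by rewrite subr_ge0.
Qed.

Lemma P_edge v e : P (Some (v, Some e)) = if ev e == v then x e / T%:R else 0.
Proof.
rewrite /=; case: eqP => // hv.
case: (eqVneq (p v) 0) => [hp|nz].
  by rewrite hp mul0r (x_pv0 hv hp) mul0r.
rewrite /rate; have Tn : T%:R != 0 :> R by rewrite pnatr_eq0 -lt0n.
by field; apply/andP.
Qed.

Lemma P_sum : \sum_o P o = 1.
Proof.
rewrite sum_option /=.
have -> : \sum_(t : V * option Ed) P (Some t) =
    \sum_(v : V) \sum_(oe : option Ed) P (Some (v, oe)).
  by rewrite pair_bigA; apply: eq_bigr => -[].
rewrite [X in _ + X](eq_bigr (fun v => P (Some (v, None)) + \sum_(e : Ed) P (Some (v, Some e)))); last first.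
  by move=> v _; rewrite sum_option.
rewrite big_split /=.
have -> : \sum_(v : V) \sum_(e : Ed) P (Some (v, Some e)) = \sum_v p v * \sum_(e | ev e == v) x e / rate T p v.
  apply: eq_bigr => v _; rewrite mulr_sumr /= [in RHS]big_mkcond /=.
  by apply: eq_bigr => e _; case: (ev e == v).
rewrite -big_split /=.
rewrite [X in _ + X](eq_bigr p); first by rewrite subrK.
by move=> v _; rewrite mulrBr mulr1 subrK.
Qed.

Lemma step_avg (Psi : {set Ed} -> R) M :
  \sum_o P o * Psi (step M o) =
  Psi M + \sum_(e | freeU M (eu e)) x e / T%:R * (Psi (e |: M) - Psi M).
Proof.
have -> : \sum_o P o * Psi (step M o) =
    \sum_o P o * Psi M + \sum_o P o * (Psi (step M o) - Psi M).
  by rewrite -big_split; apply: eq_bigr => o _ /=; rewrite -mulrDr addrCA subrr addr0.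
rewrite -mulr_suml P_sum mul1r; congr (_ + _).
rewrite sum_option /= subrr mulr0 add0r.
have -> : \sum_(t : V * option Ed) P (Some t) * (Psi (step M (Some t)) - Psi M) =
    \sum_(v : V) \sum_(oe : option Ed) P (Some (v, oe)) * (Psi (step M (Some (v, oe))) - Psi M).
  by rewrite pair_bigA; apply: eq_bigr => -[].
rewrite (eq_bigr (fun v => \sum_(e : Ed) (if ev e == v then x e / T%:R else 0) *
     (Psi (step M (Some (v, Some e))) - Psi M))); last first.
  move=> v _; rewrite sum_option [X in X + _](_ : _ = 0) ?add0r; last by rewrite /= subrr mulr0.
  by apply: eq_bigr => e _; rewrite P_edge.
rewrite exchange_big /= [in RHS]big_mkcond /=; apply: eq_bigr => e _.
rewrite (eq_bigr (fun v => if ev e == v then x e / T%:R * (Psi (step M (Some (v, Some e))) - Psi M) else 0)); last first.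
  by move=> v _; rewrite /=; case: eqP; rewrite ?mul0r.
rewrite -big_mkcond /= (eq_bigl (fun v => v == ev e)); last by move=> v; rewrite eq_sym.
rewrite big_pred1_eq /= eqxx /= -/(freeU M (eu e)).
by case: (freeU M (eu e)) => //; rewrite subrr mulr0.
Qed.

Definition Vk k (M : {set Ed}) : R :=
  \sum_(w : {ffun 'I_k -> outcome V Ed})
     (\prod_(t < k) P (w t)) * f (foldl step M [seq w t | t <- enum 'I_k]).

Lemma Vk0 M : Vk 0 M = f M.
Proof.
rewrite /Vk (eq_bigr (fun _ => f M)); last first.
  by move=> w _; rewrite big_ord0 mul1r enum_ord0.
by rewrite sumr_const card_ffun card_ord expn0.
Qed.

Lemma VkS k M : Vk k.+1 M = \sum_o P o * Vk k (step M o).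
Proof.
rewrite /Vk.
pose h (q : outcome V Ed * {ffun 'I_k -> outcome V Ed}) : {ffun 'I_k.+1 -> outcome V Ed} :=
  [ffun i => if unlift ord0 i is Some j then q.2 j else q.1].
rewrite (reindex h) /=; last first.
  exists (fun w : {ffun 'I_k.+1 -> outcome V Ed} => (w ord0, [ffun j => w (lift ord0 j)])).
    move=> [o w'] _; rewrite /h /= ffunE unlift_none; congr (_, _).
    by apply/ffunP => j; rewrite !ffunE liftK.
  move=> w _; apply/ffunP => i; rewrite /h !ffunE /=.
  case: (unliftP ord0 i) => [j ->|->] //; by rewrite ffunE.
under [RHS]eq_bigr do rewrite mulr_sumr.
rewrite pair_bigA /=; apply: eq_bigr => -[o w'] _ /=.
rewrite big_ord_recl /= /h ffunE unlift_none -mulrA; congr (_ * _).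
rewrite enum_ordSl /= ffunE unlift_none -map_comp; congr (_ * _).
  by apply: eq_bigr => i _; rewrite ffunE liftK.
congr (f (foldl _ _ _)); apply: eq_map => i /=; by rewrite ffunE liftK.
Qed.

Lemma alg_Vk : alg_expectation eu ev T p x f = Vk T set0.
Proof. by []. Qed.

Definition Phi (M : {set Ed}) : R :=
  EX x (fun S => f (M :|: [set e in S | freeU M (eu e)])).

Lemma EX_const c : EX x (fun _ => c) = c.
Proof.
rewrite (@EX_ext _ _ x _ (fun S => c * 1)); last by move=> S; rewrite mulr1.
by rewrite EX_scale EX1 mulr1.
Qed.

Lemma EX_memc e c : EX x (fun S => (e \in S)%:R * c) = x e * c.
Proof. by rewrite (EX_mem x e (fun _ => c)) EX_const. Qed.

Lemma sum_in_set (S : {set Ed}) (Q : pred Ed) (h : Ed -> R) :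
  \sum_(e in [set e in S | Q e]) h e = \sum_(e | Q e) (e \in S)%:R * h e.
Proof.
rewrite big_mkcond [RHS]big_mkcond; apply: eq_bigr => e _; rewrite inE.
by case: (e \in S); case: (Q e); rewrite ?mul1r ?mul0r.
Qed.

Lemma Phi_sub M : Phi M - f M <= \sum_(e | freeU M (eu e)) x e * (f (e |: M) - f M).
Proof.
rewrite /Phi -{1}(EX_const (f M)) -EX_sub.
apply: le_trans (@EX_le _ _ x x01 _ (fun S => \sum_(e | freeU M (eu e)) (e \in S)%:R * (f (e |: M) - f M)) _) _.
  move=> S; have := subadd fsub M [set e in S | freeU M (eu e)].
  rewrite sum_in_set => h; lra.
by rewrite EX_sum; under eq_bigr do rewrite EX_memc.
Qed.

Lemma freeU_U1 e M w : freeU (e |: M) w = (eu e != w) && freeU M w.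
Proof.
rewrite /freeU -negb_or; congr (~~ _).
apply/existsP/orP => [[e' /andP[]]|[]].
- rewrite !inE => /orP[/eqP -> ->|h1 h2]; first by left.
  by right; apply/existsP; exists e'; rewrite h1 h2.
- by move=> h; exists e; rewrite !inE eqxx h.
- by case/existsP => e' /andP[h1 h2]; exists e'; rewrite !inE h1 orbT h2.
Qed.

Lemma Phi_grp M : 0 <= \sum_(e | freeU M (eu e)) x e * (Phi (e |: M) - Phi M).
Proof.
rewrite (partition_big eu (freeU M)) //=.
apply: sumr_ge0 => u hu.
rewrite (eq_bigl (fun e => eu e == u)); last first.
  by move=> e; case: eqP => [->|]; rewrite ?hu ?andbF.
pose Rs (S : {set Ed}) := [set e' in S | freeU M (eu e') && (eu e' != u)].
pose Q0 := EX x (fun S => f (M :|: Rs S)).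
pose Qe e := EX x (fun S => f (e |: (M :|: Rs S))).
have F1 : forall e, eu e = u -> Phi (e |: M) = Qe e.
  move=> e he; apply: EX_ext => S; congr f; apply/setP => y.
  rewrite !inE freeU_U1 he [u == _]eq_sym.
  by case: (y == e); case: (y \in M); case: (y \in S); case: (freeU M (eu y)); case: (eu y == u).
have F2 : Phi M = EX x (fun S => f ((M :|: Rs S) :|: [set e' in S | eu e' == u])).
  apply: EX_ext => S; congr f; apply/setP => y; rewrite !inE.
  case: (eqVneq (eu y) u) => [->|ne]; rewrite ?hu /=.
    by case: (y \in M); case: (y \in S).
  by case: (y \in M); case: (y \in S); case: (freeU M (eu y)).
have RsU : forall e S, eu e = u -> Rs (e |: S) = Rs S.
  move=> e S he; apply/setP => y; rewrite !inE.
  by case: (eqVneq y e) => [->|]; rewrite ?he ?eqxx ?andbF.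
have F3 : Phi M <= Q0 + \sum_(e | eu e == u) x e * (Qe e - Q0).
  rewrite F2.
  apply: le_trans (@EX_le _ _ x x01 _ (fun S => f (M :|: Rs S) +
     \sum_(e | eu e == u) (e \in S)%:R * (f (e |: (M :|: Rs S)) - f (M :|: Rs S))) _) _.
    move=> S; have := subadd fsub (M :|: Rs S) [set e' in S | eu e' == u].
    by rewrite sum_in_set.
  rewrite EX_add EX_sum; apply: lerD => //; apply: ler_sum => e /eqP he.
  rewrite EX_mem (@EX_ext _ _ x _ (fun S => f (e |: (M :|: Rs S)) - f (M :|: Rs S))) ?EX_sub //.
  by move=> S; rewrite RsU.
rewrite (eq_bigr (fun e => x e * (Qe e - Q0) + x e * (Q0 - Phi M))); last first.
  by move=> e /eqP he; rewrite F1 // -mulrDr addrA subrK.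
rewrite big_split /= -mulr_suml.
have D0 : 0 <= \sum_(e | eu e == u) x e * (Qe e - Q0).
  apply: sumr_ge0 => e _; apply: mulr_ge0; first exact: x0.
  rewrite subr_ge0; apply: (EX_le x01) => S; exact: f_mono1.
have X0 : 0 <= \sum_(e | eu e == u) x e by apply: sumr_ge0 => e _; exact: x0.
have X1 := xu u.
nra.
Qed.

Definition qq : R := 1 - T%:R^-1.

Lemma tpos : 0 < T%:R^-1 :> R. Proof. by rewrite invr_gt0 Tpos. Qed.
Lemma tle1 : T%:R^-1 <= 1 :> R.
Proof. by rewrite invf_le1 ?Tpos // ler1n. Qed.
Lemma qq01 : 0 <= qq <= 1.
Proof. by rewrite /qq subr_ge0 tle1 lerBlDr lerDl (ltW tpos). Qed.

Lemma Vk_ge k M : (1 - qq ^+ k) * Phi M + qq ^+ k * f M <= Vk k M.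
Proof.
elim: k M => [|k IH] M.
  by rewrite Vk0 expr0 subrr mul0r add0r mul1r.
rewrite VkS.
set L := fun N => (1 - qq ^+ k) * Phi N + qq ^+ k * f N.
apply: le_trans (ler_sum _ (fun o _ => ler_wpM2l (P_ge0 o) (IH (step M o)))).
rewrite (step_avg L).
set A := \sum_(e | freeU M (eu e)) x e * (Phi (e |: M) - Phi M).
set B := \sum_(e | freeU M (eu e)) x e * (f (e |: M) - f M).
have -> : \sum_(e | freeU M (eu e)) x e / T%:R * (L (e |: M) - L M) =
   (1 - qq ^+ k) * T%:R^-1 * A + qq ^+ k * T%:R^-1 * B.
  rewrite /A /B !mulr_sumr -big_split /=; apply: eq_bigr => e _; rewrite /L; ring.
have hA : 0 <= (1 - qq ^+ k) * T%:R^-1 * A.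
  apply: mulr_ge0; last exact: Phi_grp.
  apply: mulr_ge0; last exact: ltW tpos.
  by rewrite subr_ge0; apply: exprn_ile1; case/andP: qq01.
have hB : qq ^+ k * T%:R^-1 * (Phi M - f M) <= qq ^+ k * T%:R^-1 * B.
  apply: ler_wpM2l; last exact: Phi_sub.
  by apply: mulr_ge0; [apply: exprn_ge0; case/andP: qq01 | exact: ltW tpos].
have -> : (1 - qq ^+ k.+1) * Phi M + qq ^+ k.+1 * f M =
    L M + qq ^+ k * T%:R^-1 * (Phi M - f M).
  by rewrite /L exprSr /qq; ring.
lra.
Qed.

Lemma final_bound : (1 - expR (-1)) * multilinear_ext f x <= alg_expectation eu ev T p x f.
Proof.
have q0 : 0 <= qq by case/andP: qq01.
have hq : qq ^+ T <= expR (-1).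
  have h : qq <= expR (- T%:R^-1).
    by rewrite /qq; apply: expR_ge1Dx.
  have := @lerXn2r R T qq (expR (- T%:R^-1)).
  rewrite !nnegrE => /(_ q0 (expR_ge0 _) h) /le_trans; apply.
  rewrite -expRM_natl mulrN divff //; by rewrite pnatr_eq0 -lt0n.
have hF : 0 <= multilinear_ext f x by apply: (EX_ge0 x01).
have := Vk_ge T set0.
have -> : Phi set0 = multilinear_ext f x.
  rewrite -[RHS]/(EX x f); apply: EX_ext => S; congr f; apply/setP => y.
  rewrite !inE /freeU.
  have -> : [exists e' in set0, eu e' == eu y] = false.
    by apply/existsP => -[e']; rewrite inE.
  by rewrite andbT.
rewrite -alg_Vk => hV.
have h1 : (1 - expR (-1)) * multilinear_ext f x <= (1 - qq ^+ T) * multilinear_ext f x.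
  by apply: ler_wpM2r => //; rewrite lerB.
have h2 : 0 <= qq ^+ T * f set0 by apply: mulr_ge0; [apply: exprn_ge0 | apply: fnn].
lra.
Qed.
End Alg.

Theorem theorem4 (R : realType) :
  forall eps : R, 0 < eps ->
  exists delta : R, 0 < delta /\
  exists N : nat,
  forall (U V Ed : finType) (eu : Ed -> U) (ev : Ed -> V)
         (f : {set Ed} -> R) (T : nat) (p : V -> R) (x : Ed -> R),
    injective (fun e => (eu e, ev e)) ->
    set_nonneg f -> set_monotone f -> set_submodular f ->
    (forall v, 0 <= p v) -> \sum_(v : V) p v <= 1 ->
    (forall v, rate T p v <= 1) ->
    (forall e, 0 <= x e <= 1) ->
    (forall v, \sum_(e : Ed | ev e == v) x e <= rate T p v) ->
    (forall u, \sum_(e : Ed | eu e == u) x e <= 1) ->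
    (N <= T)%N ->
    (#|U|%:R ^+ 2 <= delta * T%:R) ->
    (1 - expR (-1) - eps) * multilinear_ext f x
      <= alg_expectation eu ev T p x f.
Proof.
move=> eps eps0; exists 1; split => //; exists 1%N.
move=> U V Ed eu ev f T p x _ fnn fmono fsub p0 psum _ x01 xv xu T1 _.
have h := final_bound fnn fmono fsub p0 psum x01 xv xu T1.
have hF : 0 <= multilinear_ext f x by apply: (EX_ge0 x01).
have : (1 - expR (-1) - eps) * multilinear_ext f x <= (1 - expR (-1)) * multilinear_ext f x.
  by apply: ler_wpM2r => //; rewrite lerBlDr lerDl ltW.
move=> h2; exact: le_trans h2 h.
Qed.
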